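(* Let $X,Y,Z$ be compact Hausdorff spaces, and let $E\subseteq C(X)$ and $F\subseteq C(Y)$ be Riesz subspaces, dense for the supremum norm, which contain the constant functions. Let $\phi:E\times F\to C(Z)$ be a Riesz bimorphism which is bi-injective and satisfies $\phi(\mathbf{1}_X,\mathbf{1}_Y)=\mathbf{1}_Z$. Let $T:C(X\times Y)\to C(Z)$ be a lattice homomorphism with $T(\chi(f,g))=\phi(f,g)$ for all $f\in E$, $g\in F$ (such a $T$ exists and is uniquely determined by $\phi$). Then $T$ is injective.
   Context: For Riesz spaces $E,F,G$, a linear map $T:E\to G$ is a Riesz (lattice) homomorphism if $T(x\vee y)=Tx\vee Ty$ for all $x,y$. A bilinear map $\phi:E\times F\to G$ is a Riesz bimorphism if $\phi(\cdot,y):E\to G$ is a Riesz homomorphism for every $y\in F_+$ and $\phi(x,\cdot):F\to G$ is a Riesz homomorphism for every $x\in E_+$. $\phi$ is bi-injective if $\phi(x,y)=0$ implies $x=0$ or $y=0$. The natural bilinear embedding $\chi:C(X)\times C(Y)\to C(X\times Y)$ is $\chi(f,g)(x,y)=f(x)g(y)$. $\mathbf{1}_X$ denotes the constant function one on $X$. *)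

(* Defs.v *)
(* C(X) = real-valued continuous functions X -> R,
   R an arbitrary realType (a model of the reals). *)
From HB Require Import structures.
From mathcomp Require Import all_boot all_order all_algebra.
From mathcomp Require Import all_classical all_reals all_analysis.
Set Implicit Arguments. Unset Strict Implicit. Unset Printing Implicit Defensive.
Import Order.TTheory GRing.Theory Num.Theory numFieldNormedType.Exports.
Local Open Scope classical_set_scope.
Local Open Scope ring_scope.

Definition cts (X : topologicalType) (R : realType) (f : X -> R) : Prop :=
  continuous f.

Definition riesz_subspace (X : topologicalType) (R : realType)
    (E : set (X -> R)) : Prop :=
  [/\ E `<=` @cts X R,
      E (fun _ => 0),
      (forall f g, E f -> E g -> E (fun x => f x + g x)),
      (forall (a : R) f, E f -> E (fun x => a * f x)) &
      (forall f g, E f -> E g -> E (fun x => Num.max (f x) (g x)))].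

Definition contains_constants (X : topologicalType) (R : realType)
    (E : set (X -> R)) : Prop :=
  forall c : R, E (fun _ => c).

Definition sup_dense (X : topologicalType) (R : realType)
    (E : set (X -> R)) : Prop :=
  forall f : X -> R, cts f -> forall eps : R, 0 < eps ->
    exists2 g, E g & forall x, `|f x - g x| <= eps.

Definition pos_part_set (X : Type) (R : realType) (E : set (X -> R)) :
  set (X -> R) := [set f | E f /\ forall x, 0 <= f x].

Definition bilinear_on (X Y Z : topologicalType) (R : realType)
    (E : set (X -> R)) (F : set (Y -> R))
    (phi : (X -> R) -> (Y -> R) -> (Z -> R)) : Prop :=
  [/\ (forall f g, E f -> F g -> cts (phi f g)),
      (forall (a : R) f1 f2 g, E f1 -> E f2 -> F g ->
         phi (fun x => a * f1 x + f2 x) g = (fun z => a * phi f1 g z + phi f2 g z)) &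
      (forall (a : R) f g1 g2, E f -> F g1 -> F g2 ->
         phi f (fun y => a * g1 y + g2 y) = (fun z => a * phi f g1 z + phi f g2 z))].

Definition riesz_bimorphism_on (X Y Z : topologicalType) (R : realType)
    (E : set (X -> R)) (F : set (Y -> R))
    (phi : (X -> R) -> (Y -> R) -> (Z -> R)) : Prop :=
  [/\ bilinear_on E F phi,
      (forall g, pos_part_set F g -> forall f1 f2, E f1 -> E f2 ->
         phi (fun x => Num.max (f1 x) (f2 x)) g
         = (fun z => Num.max (phi f1 g z) (phi f2 g z))) &
      (forall f, pos_part_set E f -> forall g1 g2, F g1 -> F g2 ->
         phi f (fun y => Num.max (g1 y) (g2 y))
         = (fun z => Num.max (phi f g1 z) (phi f g2 z)))].

Definition bi_injective_on (X Y Z : Type) (R : realType)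
    (E : set (X -> R)) (F : set (Y -> R))
    (phi : (X -> R) -> (Y -> R) -> (Z -> R)) : Prop :=
  forall f g, E f -> F g -> phi f g = (fun _ => 0) ->
    f = (fun _ => 0) \/ g = (fun _ => 0).

Definition lattice_hom_on (W Z : topologicalType) (R : realType)
    (T : (W -> R) -> (Z -> R)) : Prop :=
  [/\ (forall h, cts h -> cts (T h)),
      (forall (a : R) h1 h2, cts h1 -> cts h2 ->
         T (fun w => a * h1 w + h2 w) = (fun z => a * T h1 z + T h2 z)) &
      (forall h1 h2, cts h1 -> cts h2 ->
         T (fun w => Num.max (h1 w) (h2 w)) = (fun z => Num.max (T h1 z) (T h2 z)))].

Definition chi (X Y : Type) (R : realType) (f : X -> R) (g : Y -> R) :
  X * Y -> R := fun p => f p.1 * g p.2.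

(* Main.v *)
Require Import Defs.
From HB Require Import structures.
From mathcomp Require Import all_boot all_order all_algebra.
From mathcomp Require Import all_classical all_reals all_analysis.
From mathcomp Require Import ring lra.
Import Order.TTheory GRing.Theory Num.Theory numFieldNormedType.Exports.
Local Open Scope classical_set_scope.
Local Open Scope ring_scope.

Section helpers.
Context (R : realType) (X : topologicalType).

Lemma cts_cst (c : R) : @cts X R (fun _ => c).
Proof. move=> x; exact: cvg_cst. Qed.

Lemma cts_add (f g : X -> R) : cts f -> cts g -> cts (fun x => f x + g x).
Proof. by move=> cf cg x; apply: cvgD; [exact: cf|exact: cg]. Qed.

Lemma cts_sub (f g : X -> R) : cts f -> cts g -> cts (fun x => f x - g x).
Proof. by move=> cf cg x; apply: cvgB; [exact: cf|exact: cg]. Qed.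

Lemma cts_mul (f g : X -> R) : cts f -> cts g -> cts (fun x => f x * g x).
Proof. by move=> cf cg x; apply: continuousM; [exact: cf|exact: cg]. Qed.

Lemma cts_max (f g : X -> R) : cts f -> cts g -> cts (fun x => Num.max (f x) (g x)).
Proof. by move=> cf cg x; apply: continuous_max; [exact: cf|exact: cg]. Qed.

Lemma cts_scale (a : R) (f : X -> R) : cts f -> cts (fun x => a * f x).
Proof. by move=> cf; apply: cts_mul => //; exact: cts_cst. Qed.

End helpers.
Lemma bump_fn (R : realType) (X : topologicalType)
  (cX : compact [set: X]) (hX : hausdorff_space X)
  (E : set (X -> R)) (rE : riesz_subspace E) (dE : sup_dense E)
  (kE : contains_constants E) (x0 : X) (A : set X) (nA : nbhs x0 A) :
  exists f, [/\ E f, forall x, 0 <= f x <= 1, 0 < f x0 & forall x, ~ A x -> f x = 0].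
Proof.
have crX : completely_regular_space X :=
  @normal_completely_regular R X (compact_normal hX cX) (hausdorff_accessible hX).
set u := @Urysohn X R [set x0] (~` A°).
have sep : uniform_separator [set x0] (~` A°).
  apply: crX; first by rewrite closedC; exact: open_interior.
  by move=> H; apply: H; exact: nA.
have u0 : u x0 = 0 by apply: (Urysohn_sub0 sep); exists x0.
have u1 : forall x, ~ A x -> u x = 1.
  move=> x nAx; apply: (Urysohn_sub1 sep); exists x => //.
  by move=> /interior_subset.
have ur : forall x, 0 <= u x <= 1.
  by move=> x; have := Urysohn_range (imageT u x); rewrite /= in_itv.
have cu : cts u by exact: Urysohn_continuous.
have cfx : cts (fun x => 1 - u x) by apply: cts_sub => //; exact: cts_cst.
have [e Ee he] := dE _ cfx (1/4) ltac:(lra).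
case: rE => _ _ Eadd _ Emax.
exists (fun x => Num.max (e x + (- (1/2))) 0); split.
- exact: (Emax _ _ (Eadd _ _ Ee (kE _)) (kE 0)).
- move=> x; move: (he x) (ur x); rewrite ler_norml => /andP[h1 h2] /andP[h3 h4].
  rewrite le_max lexx orbT /= ge_max; apply/andP; split; lra.
- move: (he x0); rewrite u0 ler_norml => /andP[h1 h2].
  rewrite lt_max; apply/orP; left; lra.
- move=> x nAx; move: (he x); rewrite u1 // ler_norml => /andP[h1 h2].
  rewrite max_r //; lra.
Qed.

Theorem proposition3p3 (R : realType) (X Y Z : topologicalType)
  (cX : compact [set: X]) (hX : hausdorff_space X)
  (cY : compact [set: Y]) (hY : hausdorff_space Y)
  (cZ : compact [set: Z]) (hZ : hausdorff_space Z)
  (E : set (X -> R)) (F : set (Y -> R))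
  (rE : riesz_subspace E) (rF : riesz_subspace F)
  (dE : sup_dense E) (dF : sup_dense F)
  (kE : contains_constants E) (kF : contains_constants F)
  (phi : (X -> R) -> (Y -> R) -> (Z -> R))
  (bphi : riesz_bimorphism_on E F phi)
  (iphi : bi_injective_on E F phi)
  (uphi : phi (fun _ => 1) (fun _ => 1) = (fun _ => 1))
  (T : (X * Y -> R) -> (Z -> R))
  (hT : lattice_hom_on T)
  (eT : forall f g, E f -> F g -> T (chi f g) = phi f g) :
  forall h1 h2 : X * Y -> R, cts h1 -> cts h2 -> T h1 = T h2 -> h1 = h2.
Proof.
move=> h1 h2 c1 c2 eq12.
case: hT => cT lin lmax.
have c0 := @cts_cst R (X * Y)%type 0.
have T0 : T (fun _ => 0) = (fun _ => 0).
  have H : T (fun _ => 1 * 0 + 0) = fun z => 1 * T (fun _ => 0) z + T (fun _ => 0) z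
    := lin 1 (fun _ => 0) (fun _ => 0) c0 c0.
  rewrite mul1r addr0 in H.
  apply/funext => z; have := congr1 (fun G => G z) H => /=; lra.
have Tsc : forall a h, cts h -> T (fun w => a * h w) = fun z => a * T h z.
  move=> a h ch.
  have H : T (fun w => a * h w + 0) = fun z => a * T h z + T (fun _ => 0) z
    := lin a h (fun _ => 0) ch c0.
  rewrite T0 in H.
  have e1 : (fun w => a * h w + 0) = (fun w => a * h w) by apply/funext => w; rewrite addr0.
  rewrite e1 in H; rewrite H; apply/funext => z; rewrite addr0 //.
have Tpos : forall h, cts h -> (forall w, 0 <= h w) -> forall z, 0 <= T h z.
  move=> h ch hp z.
  have H : T (fun w => Num.max (h w) 0) = fun z => Num.max (T h z) (T (fun _ => 0) z)
    := lmax h (fun _ => 0) ch c0.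
  have e1 : (fun w => Num.max (h w) 0) = h by apply/funext => w; rewrite max_l.
  rewrite e1 T0 in H; rewrite H /= le_max lexx orbT //.
have Tmono : forall g1 g2, cts g1 -> cts g2 -> (forall w, g1 w <= g2 w) ->
    forall z, T g1 z <= T g2 z.
  move=> g1 g2 cg1 cg2 le12 z.
  have cd : cts (fun w => g2 w - g1 w) by exact: cts_sub.
  have H : T (fun w => 1 * (g2 w - g1 w) + g1 w) = fun z => 1 * T (fun w => g2 w - g1 w) z + T g1 z
    := lin 1 (fun w => g2 w - g1 w) g1 cd cg1.
  have e1 : (fun w => 1 * (g2 w - g1 w) + g1 w) = g2 by apply/funext => w; ring.
  rewrite e1 in H; rewrite H /=.
  have := Tpos _ cd (fun w => ltac:(move: (le12 w); lra)) z; lra.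
set h := fun w => h1 w - h2 w.
have ch : cts h by exact: cts_sub.
have Th : T h = fun _ => 0.
  have H : T (fun w => 1 * (h1 w - h2 w) + h2 w) = fun z => 1 * T h z + T h2 z
    := lin 1 h h2 ch c2.
  have e1 : (fun w => 1 * (h1 w - h2 w) + h2 w) = h1 by apply/funext => w; ring.
  rewrite e1 eq12 in H; apply/funext => z; have := congr1 (fun G => G z) H => /=; lra.
set k := fun w => Num.max (h w) (-1 * h w + 0).
have cn : cts (fun w => -1 * h w + 0) by apply: cts_add; [exact: cts_scale | exact: c0].
have ck : cts k by exact: cts_max.
have Tk : T k = fun _ => 0.
  have H : T k = fun z => Num.max (T h z) (T (fun w => -1 * h w + 0) z)
    := lmax h (fun w => -1 * h w + 0) ch cn.
  have Hn : T (fun w => -1 * h w + 0) = fun z => -1 * T h z + T (fun _ => 0) z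
    := lin (-1) h (fun _ => 0) ch c0.
  rewrite H Hn Th T0; apply/funext => z /=; rewrite mulr0 addr0 maxxx //.
have kE' : forall w, k w = `|h w| by move=> w; rewrite /k mulN1r addr0 maxrN.
apply/funext => p; apply/eqP/negPn/negP => hne.
have hp : 0 < `|h p| by rewrite normr_gt0 /h subr_eq0.
set c := `|h p| / 2.
have c_gt0 : 0 < c by rewrite /c; lra.
have nW : nbhs p (k @^-1` [set r | c < r]).
  apply: ck; apply: open_nbhs_nbhs; split; first exact: open_gt.
  by rewrite /= kE' /c; lra.
case: nW => -[A B] /= [nA nB] sAB.
have [f [Ef f01 fp fA]] := @bump_fn R X cX hX E rE dE kE _ _ nA.
have [g [Fg g01 gp gB]] := @bump_fn R Y cY hY F rF dF kF _ _ nB.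
have cf : cts f by case: rE => + _ _ _ _; apply.
have cg : cts g by case: rF => + _ _ _ _; apply.
have cchi : cts (chi f g).
  move=> q; apply: continuousM.
    apply: (@continuous_comp _ _ _ fst f); last exact: cf.
    exact: cvg_fst.
  apply: (@continuous_comp _ _ _ snd g); last exact: cg.
  exact: cvg_snd.
have cck : cts (fun w => c^-1 * k w) by exact: cts_scale.
have bnd : forall w, chi f g w <= c^-1 * k w.
  move=> [x y]; rewrite /chi /=.
  have kge0 : 0 <= c^-1 * k (x, y) by rewrite kE' mulr_ge0 // invr_ge0 ltW.
  have [Ax|nAx] := pselect (A x); last by rewrite fA // mul0r.
  have [By|nBy] := pselect (B y); last by rewrite gB // mulr0.
  have ck1 : c < k (x, y) by exact: (sAB (x, y)).
  have /andP[f0 f1] := f01 x; have /andP[g0 g1] := g01 y.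
  apply: (le_trans (mulr_ile1 f0 g0 f1 g1)).
  rewrite -(mulVf (lt0r_neq0 c_gt0)); apply: ler_wpM2l; first by rewrite invr_ge0 ltW.
  exact: ltW.
have Tz : phi f g = fun _ => 0.
  rewrite -eT //; apply/funext => z; apply/eqP; rewrite eq_le; apply/andP; split.
    have := Tmono _ _ cchi cck bnd z; rewrite Tsc // Tk /= mulr0 //.
  apply: Tpos => // w; rewrite /chi; apply: mulr_ge0.
    by have /andP[] := f01 w.1.
  by have /andP[] := g01 w.2.
have [f0|g0] := iphi f g Ef Fg Tz.
  by have := congr1 (fun G => G p.1) f0 => /= e; rewrite e ltxx in fp.
by have := congr1 (fun G => G p.2) g0 => /= e; rewrite e ltxx in gp.
Qed.
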